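(* Let $X$ be an Alexandroff $T_0$-space and let $\varphi:\mathbb{R}\times X\rightarrow X$ be a flow. Then $\varphi$ is trivial, i.e. $\varphi(t,x)=x$ for every $t\in\mathbb{R}$ and every $x\in X$.
   Context: An Alexandroff space is a topological space in which arbitrary intersections of open sets are open. A flow on a topological space $X$ is a continuous map $\varphi:\mathbb{R}\times X\to X$ (with $\mathbb{R}$ carrying its usual topology and $\mathbb{R}\times X$ the product topology) such that $\varphi(0,x)=x$ and $\varphi(s+t,x)=\varphi(s,\varphi(t,x))$ for all $s,t\in\mathbb{R}$, $x\in X$. *)

(* Defs.v *)
From HB Require Import structures.
From mathcomp Require Import all_boot all_order all_algebra.
From mathcomp Require Import all_classical all_reals all_analysis.
Set Implicit Arguments. Unset Strict Implicit. Unset Printing Implicit Defensive.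
Import Order.TTheory GRing.Theory Num.Theory.
Import numFieldTopology.Exports numFieldNormedType.Exports.
Local Open Scope classical_set_scope.
Local Open Scope ring_scope.

Definition alexandroff_space (X : topologicalType) : Prop :=
  forall (F : set (set X)), (forall A, F A -> open A) ->
    open (\bigcap_(A in F) A).

Definition is_flow (R : realType) (X : topologicalType) (phi : R * X -> X) : Prop :=
  continuous phi /\
  (forall x, phi (0, x) = x) /\
  (forall s t x, phi (s + t, x) = phi (s, phi (t, x))).

(* Main.v *)
Require Import Defs.
From HB Require Import structures.
From mathcomp Require Import all_boot all_order all_algebra.
From mathcomp Require Import all_classical all_reals all_analysis.
Import Order.TTheory GRing.Theory Num.Theory.
Import numFieldTopology.Exports numFieldNormedType.Exports.
Local Open Scope classical_set_scope.
Local Open Scope ring_scope.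

Definition sle (X : topologicalType) (y x : X) :=
  forall A : set X, open A -> A x -> A y.
Arguments sle {X}.

Lemma nbhs_sle (X : topologicalType) (x y : X) (Q : set X) :
  sle y x -> nbhs x Q -> Q y.
Proof.
move=> lyx; rewrite nbhsE => -[A [oA Ax] AQ].
by apply: AQ; apply: lyx.
Qed.

Arguments nbhs_sle {X x y Q}.

Lemma L1 (R : realType) (X : topologicalType) (phi : R * X -> X) :
  continuous phi -> forall t x B, open B -> B (phi (t,x)) ->
  exists2 e : R, 0 < e & forall s y, `|t - s| < e -> sle y x -> B (phi (s,y)).
Proof.
move=> cphi t x B oB Bp.
have : nbhs (t,x) (phi @^-1` B).
  by apply: (cphi (t,x)); apply: open_nbhs_nbhs; split.
case=> -[P Q] /= [Pt Qx] PQ.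
move: Pt => /nbhs_ballP [e e0 He]; exists e => // s y ts lyx.
apply: (PQ (s,y)); split => /=.
  by apply: He; rewrite -ball_normE /ball_ /=.
exact: (nbhs_sle lyx).
Qed.

Lemma T0_antisym (X : topologicalType) (x y : X) :
  kolmogorov_space X -> sle y x -> sle x y -> x = y.
Proof.
move=> k lyx lxy; apply/eqP; apply/negPn/negP => /k [A [[]|[]]].
- by rewrite inE => /(nbhs_sle lyx) Ay; rewrite inE.
- by rewrite inE => /(nbhs_sle lxy) Ax; rewrite inE.
Qed.

Arguments L1 {R X phi}.
Arguments T0_antisym {X x y}.

Theorem mainTheorem4 (R : realType) (X : topologicalType)
  (phi : R * X -> X) :
  alexandroff_space X -> kolmogorov_space X -> is_flow phi ->
  forall (t : R) (x : X), phi (t, x) = x.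
Proof.
move=> alex k [cphi [phi0 phiD]] t x.
pose U := \bigcap_(A in [set A : set X | open A /\ A x]) A.
have oU : open U by apply: alex => A [].
have Ux : U x by move=> A [].
have mono : forall s y z, sle y z -> sle (phi (s,y)) (phi (s,z)).
  move=> s y z lyz A oA Az.
  have [e e0 He] := L1 cphi _ _ _ oA Az.
  by apply: He => //; rewrite subrr normr0.
have [e e0 He] := L1 cphi 0 x U oU (eq_ind_r U Ux (phi0 x)).
have small : forall s, `|s| < e -> phi (s, x) = x.
  move=> s hs.
  have lsx : forall s, `|s| < e -> sle (phi (s,x)) x.
    move=> s' hs' A oA Ax.
    have : U (phi (s',x)) by apply: He => //; rewrite sub0r normrN.
    by apply; split.
  apply: T0_antisym => //; last exact: lsx.
  have := mono s _ _ (lsx (- s) _); rewrite normrN => /(_ hs).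
  by rewrite -phiD subrr phi0.
have [n hn] : exists n : nat, `|t| / n.+1%:R < e.
  exists (Num.Def.archi_bound (`|t| / e)).
  rewrite ltr_pdivrMr ?ltr0Sn // mulrC -ltr_pdivrMr //.
  apply: lt_le_trans (archi_boundP _) _.
    by rewrite divr_ge0 // ltW.
  by rewrite ler_nat.
set u := t / n.+1%:R.
have hu : `|u| < e by rewrite /u normrM normfV normr_nat.
have iter : forall k : nat, phi (u *+ k, x) = x.
  elim=> [|m IH]; first by rewrite mulr0n phi0.
  by rewrite mulrS phiD IH small.
have -> : t = u *+ n.+1.
  by rewrite /u -mulr_natr mulfVK // pnatr_eq0.
exact: iter.
Qed.
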